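(* Let $G$ be a finite simple graph, let $v \in V(G)$, and let $G_0$ be a nonempty union of connected components of $G[N(v)]$. If $G_0$ is a weak König–Egerváry graph, then $G$ has a reducible set of edges. Also, if $G[N(v)]$ is a weak König–Egerváry graph, then $\{v\}$ is a reducible set of vertices.
   Context: A graph $H$ is a weak König–Egerváry graph if $H$ has a matching $M$ and a vertex set $Q \subseteq V(H)$ with $|Q| \leq |M|$ such that $Q$ is a vertex cover of $H - M$. For a set $\mathcal{S}$ of triangles, an $\mathcal{S}$-edge is an edge of a triangle in $\mathcal{S}$. A nonempty edge set $E_0 \subseteq E(G)$ is reducible if there exist a set $\mathcal{S}$ of pairwise edge-disjoint triangles and a set $X \subseteq E(G)$ such that (i) $|X| \leq 2|\mathcal{S}|$; (ii) $G - X$ has no triangle containing an edge of $E_0$; (iii) $X$ contains every $\mathcal{S}$-edge not in $E_0$. A nonempty vertex set $V_0 \subseteq V(G)$ is reducible if there exist such $\mathcal{S}$ and $X$ with (i) $|X| \leq 2|\mathcal{S}|$; (ii) $G - X$ has no triangle containing a vertex of $V_0$; (iii) $X$ contains every $\mathcal{S}$-edge whose endpoints both lie outside $V_0$. *)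

(* Defs.v *)
(* Finite simple graphs as symmetric irreflexive relations
   on a finType; edges are 2-element vertex sets. *)
From mathcomp Require Import all_boot.
Set Implicit Arguments. Unset Strict Implicit. Unset Printing Implicit Defensive.

Section Graphs.
Variables (T : finType) (e : rel T).

Definition edges : {set {set T}} :=
  [set E : {set T} | [exists x, exists y, e x y && (E == [set x; y])]].

Definition edges_in (A : {set T}) : {set {set T}} :=
  [set E in edges | E \subset A].

Definition nbhd (v : T) : {set T} := [set u | e v u].

Definition matching_in (A : {set T}) (M : {set {set T}}) : Prop :=
  M \subset edges_in A /\
  (forall E1 E2, E1 \in M -> E2 \in M -> E1 != E2 -> [disjoint E1 & E2]).

Definition weakKE (A : {set T}) : Prop :=
  exists (M : {set {set T}}) (Q : {set T}),
    [/\ matching_in A M, Q \subset A, #|Q| <= #|M| &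
        forall E, E \in edges_in A -> E \notin M -> E :&: Q != set0].

Definition triangles : {set {set T}} :=
  [set t : {set T} | [exists a, exists b, exists c,
     [&& e a b, e b c, e a c & t == [set a; b; c]]]].

Definition tri_edges (t : {set T}) : {set {set T}} :=
  [set E in edges | E \subset t].

Definition edge_disjoint_triangles (S : {set {set T}}) : Prop :=
  S \subset triangles /\
  (forall t1 t2, t1 \in S -> t2 \in S -> t1 != t2 ->
     [disjoint tri_edges t1 & tri_edges t2]).

Definition triangle_avoiding (X : {set {set T}}) (t : {set T}) : Prop :=
  t \in triangles /\ [disjoint tri_edges t & X].

Definition reducible_edges (E0 : {set {set T}}) : Prop :=
  [/\ E0 != set0, E0 \subset edges &
   exists (S X : {set {set T}}),
     [/\ edge_disjoint_triangles S, X \subset edges,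
         #|X| <= 2 * #|S|,
         (forall t, triangle_avoiding X t -> [disjoint tri_edges t & E0]) &
         (forall t E, t \in S -> E \in tri_edges t -> E \notin E0 -> E \in X)]].

Definition reducible_vertices (V0 : {set T}) : Prop :=
  V0 != set0 /\
  exists (S X : {set {set T}}),
    [/\ edge_disjoint_triangles S, X \subset edges,
        #|X| <= 2 * #|S|,
        (forall t, triangle_avoiding X t -> [disjoint t & V0]) &
        (forall t E, t \in S -> E \in tri_edges t -> [disjoint E & V0] -> E \in X)].

Definition union_of_components (A C : {set T}) : Prop :=
  [/\ C != set0, C \subset A &
      forall x y, x \in C -> y \in A -> e x y -> y \in C].

End Graphs.

(* Main.v *)
Require Import Defs.
From mathcomp Require Import all_boot.
Set Implicit Arguments. Unset Strict Implicit. Unset Printing Implicit Defensive.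

Lemma disjI (T : finType) (A B : {set T}) :
  (forall x, x \in A -> x \in B -> False) -> [disjoint A & B].
Proof.
move=> H; rewrite -setI_eq0; apply/eqP/setP=> x; rewrite !inE.
apply/negP => /andP[a b]; exact: H a b.
Qed.

Lemma disjE (T : finType) (A B : {set T}) x :
  [disjoint A & B] -> x \in A -> x \in B -> False.
Proof.
rewrite -setI_eq0 => /eqP/setP/(_ x); rewrite !inE => H a b.
by rewrite a b in H.
Qed.

Section Aux.
Variables (T : finType) (e : rel T).
Hypotheses (sym_e : symmetric e) (irr_e : irreflexive e).

Lemma edgeP F : F \in edges e -> exists x y, [/\ e x y, x != y & F = [set x; y]].
Proof.
rewrite inE => /existsP[x /existsP[y /andP[exy /eqP->]]].
exists x, y; split => //; apply/eqP => xy; subst; by rewrite irr_e in exy.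
Qed.

Lemma edge_set x y : e x y -> [set x; y] \in edges e.
Proof.
move=> H; rewrite inE; apply/existsP; exists x; apply/existsP; exists y.
by rewrite H eqxx.
Qed.

Lemma neq_of_e x y : e x y -> x != y.
Proof. by move=> H; apply/eqP => xy; subst; rewrite irr_e in H. Qed.

Lemma triP t : t \in triangles e ->
  exists a b c, [/\ e a b, e b c, e a c & t = [set a; b; c]].
Proof.
rewrite inE => /existsP[a /existsP[b /existsP[c /and4P[h1 h2 h3 /eqP->]]]].
by exists a, b, c.
Qed.

Lemma tri_adj t x y : t \in triangles e -> x \in t -> y \in t -> x != y -> e x y.
Proof.
case/triP=> a [b [c [eab ebc eac ->]]].
rewrite !inE => /orP[/orP[]|]/eqP-> /orP[/orP[]|]/eqP->; rewrite ?eqxx // => _;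
  by rewrite // sym_e.
Qed.

Lemma tri_third t x y : t \in triangles e ->
  exists z, [/\ z \in t, z != x & z != y].
Proof.
move=> Ht; have := Ht; case/triP=> a [b [c [eab ebc eac tE]]].
have Hlt : #|[set x; y]| < #|t|.
  rewrite tE cards2 setUC cardsU1 cards2 !inE (neq_of_e eab).
  rewrite (eq_sym c a) (eq_sym c b) (negbTE (neq_of_e eac)) (negbTE (neq_of_e ebc)) /=.
  by case: (x != y).
have : ~~ (t \subset [set x; y]).
  by apply/negP => /subset_leq_card; rewrite leqNgt Hlt.
case/subsetPn => z zt; rewrite !inE negb_or => /andP[zx zy].
by exists z.
Qed.

Lemma tri_edge_in t x y : t \in triangles e -> x \in t -> y \in t -> x != y ->
  [set x; y] \in tri_edges e t.
Proof.
move=> Ht xt yt xy; rewrite inE edge_set ?(tri_adj Ht) //=.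
by apply/subsetP => z; rewrite !inE => /orP[]/eqP->.
Qed.

End Aux.

Section Main.
Variables (T : finType) (e : rel T).
Hypotheses (sym_e : symmetric e) (irr_e : irreflexive e).
Variables (v : T) (C : {set T}) (M : {set {set T}}) (Q : {set T}).
Hypotheses (HCn : C \subset nbhd e v)
  (Hcl : forall x y, x \in C -> y \in nbhd e v -> e x y -> y \in C)
  (HM : matching_in e C M) (HQ : Q \subset C) (HQM : #|Q| <= #|M|)
  (Hcov : forall E, E \in edges_in e C -> E \notin M -> E :&: Q != set0).

Definition SS := [set v |: E | E in M].
Definition XX := M :|: [set [set v; q] | q in Q].

Lemma inC_e c : c \in C -> e v c.
Proof. by move=> /(subsetP HCn); rewrite inE. Qed.

Lemma M_sub E : E \in M -> E \in edges e /\ E \subset C.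
Proof.
case: HM => /subsetP H _ /H; by rewrite inE => /andP[].
Qed.

Lemma v_notin E : E \in M -> v \notin E.
Proof.
case/M_sub => _ /subsetP H; apply/negP => /H /inC_e; by rewrite irr_e.
Qed.

Lemma XX_edges : XX \subset edges e.
Proof.
apply/subsetP => F; rewrite inE => /orP[/M_sub[] // | /imsetP[q qQ ->]].
by apply: edge_set; apply: inC_e; apply: (subsetP HQ).
Qed.

Lemma card_SS : #|SS| = #|M|.
Proof.
apply: card_in_imset => E1 E2 h1 h2 eq.
by rewrite -(setU1K (v_notin h1)) eq setU1K // v_notin.
Qed.

Lemma card_XX : #|XX| <= 2 * #|SS|.
Proof.
rewrite card_SS; apply: leq_trans (leq_card_setU _ _) _.
rewrite mul2n -addnn leq_add2l; exact: leq_trans (leq_imset_card _ _) HQM.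
Qed.

Lemma SS_shape t : t \in SS -> exists a b, [/\ [set a; b] \in M, e a b, a \in C, b \in C
  & t = [set v; a; b]].
Proof.
case/imsetP => E EM ->; have [Ee Esub] := M_sub EM.
case/(edgeP irr_e): Ee => a [b [eab _ Eab]]; subst E.
exists a, b; split => //.
- by apply: (subsetP Esub); rewrite !inE eqxx.
- by apply: (subsetP Esub); rewrite !inE eqxx orbT.
- by rewrite setUA.
Qed.

Lemma SS_tri : SS \subset triangles e.
Proof.
apply/subsetP => t /SS_shape [a [b [_ eab aC bC ->]]].
rewrite inE; apply/existsP; exists v; apply/existsP; exists a; apply/existsP; exists b.
by rewrite inC_e // eab inC_e // eqxx.
Qed.

Lemma SS_edges t F : t \in SS -> F \in tri_edges e t ->
  (v \notin F -> F \in M) /\ (v \in F -> exists2 c, c \in C & F = [set v; c]).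
Proof.
case/imsetP => E EM ->; have [Ee Esub] := M_sub EM.
rewrite inE => /andP[/(edgeP irr_e) [x [y [exy xy ->]]] Fsub]; split.
  move=> vF; have Hs : [set x; y] \subset E.
    apply/subsetP => z zF; move/subsetP: Fsub => /(_ z zF); rewrite in_setU1.
    case/orP => // /eqP zv; subst z; by rewrite zF in vF.
  case/(edgeP irr_e): Ee => a [b [_ ab Eab]].
  suff -> : [set x; y] = E by [].
  apply/eqP; rewrite eqEcard Hs Eab !cards2 xy ab //.
rewrite !inE => /orP[]/eqP vE; rewrite -vE in xy Fsub *.
- exists y; last by [].
  have : y \in v |: E by apply: (subsetP Fsub); rewrite !inE eqxx orbT.
  rewrite in_setU1 => /orP[/eqP yv|]; first by rewrite yv eqxx in xy.
  exact: (subsetP Esub).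
- exists x; last by rewrite setUC.
  have : x \in v |: E by apply: (subsetP Fsub); rewrite !inE eqxx.
  rewrite in_setU1 => /orP[/eqP xv|]; first by rewrite xv eqxx in xy.
  exact: (subsetP Esub).
Qed.

Lemma SS_disj : edge_disjoint_triangles e SS.
Proof.
split; first exact: SS_tri.
move=> t1 t2 h1 h2 ne; apply: disjI => F f1 f2.
move: (f1); rewrite inE => /andP[/(edgeP irr_e) [x [y [_ xy Fxy]]] _].
case/imsetP: h1 f1 ne => E1 E1M -> f1.
case/imsetP: h2 f2 => E2 E2M -> f2 ne.
have E12 : E1 != E2 by apply: contraNneq ne => ->.
have [_ Hd] := HM.
have Hdis := Hd _ _ E1M E2M E12.
(* one of x, y is not v, and lies in both E1 and E2 *)
have inboth z : z \in F -> z != v -> (z \in E1) && (z \in E2).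
  move=> zF zv; move: f1 f2; rewrite !inE => /andP[_ /subsetP s1] /andP[_ /subsetP s2].
  move: (s1 z zF) (s2 z zF); rewrite !in_setU1 (negbTE zv) /= => -> -> //.
have [xv|xv] := eqVneq x v.
- have /andP[a b] : (y \in E1) && (y \in E2).
    apply: inboth; first by rewrite Fxy !inE eqxx orbT.
    by rewrite -xv eq_sym.
  exact: (disjE Hdis a b).
- have /andP[a b] : (x \in E1) && (x \in E2).
    by apply: inboth => //; rewrite Fxy !inE eqxx.
  exact: (disjE Hdis a b).
Qed.

Lemma key t c : triangle_avoiding e XX t -> v \in t -> c \in t -> c \in C -> c != v -> False.
Proof.
case=> Ht Hdis vt ct cC cv.
have [w [wt wv wc]] := tri_third irr_e v c Ht.
have evw : e v w by apply: (tri_adj sym_e Ht) => //; rewrite eq_sym.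
have ecw : e c w by apply: (tri_adj sym_e Ht) => //; rewrite eq_sym.
have wC : w \in C by apply: (Hcl cC) => //; rewrite inE.
have Fin : [set c; w] \in tri_edges e t by apply: tri_edge_in => //; rewrite eq_sym.
have [FM|FM] := boolP ([set c; w] \in M).
  by apply: (disjE Hdis Fin); rewrite inE FM.
have : [set c; w] :&: Q != set0.
  apply: Hcov FM; rewrite inE edge_set //=.
  by apply/subsetP => z; rewrite !inE => /orP[]/eqP->.
case/set0Pn => z; rewrite !inE => /andP[/orP[]/eqP -> zQ].
- apply: (disjE Hdis (x := [set v; c])); first by apply: tri_edge_in; rewrite // eq_sym.
  by rewrite inE; apply/orP; right; apply/imsetP; exists c.
- apply: (disjE Hdis (x := [set v; w])); first by apply: tri_edge_in; rewrite // eq_sym.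
  by rewrite inE; apply/orP; right; apply/imsetP; exists w.
Qed.

End Main.

Theorem lemma4p4 (T : finType) (e : rel T) (sym_e : symmetric e)
  (irr_e : irreflexive e) (v : T) :
  (forall C : {set T}, union_of_components e (nbhd e v) C -> weakKE e C ->
     exists E0 : {set {set T}}, reducible_edges e E0) /\
  (weakKE e (nbhd e v) -> reducible_vertices e [set v]).
Proof.
split.
- move=> C [Cne HCn Hcl] [M [Q [HM HQ HQM Hcov]]].
  have inCe c : c \in C -> e v c by move=> /(subsetP HCn); rewrite inE.
  exists [set [set v; c] | c in C]; split.
  + case/set0Pn: Cne => c cC; apply/set0Pn; exists [set v; c]; exact: imset_f.
  + apply/subsetP => F /imsetP[c cC ->]; exact: edge_set (inCe c cC).
  exists (SS v M), (XX v M Q); split.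
  + exact (SS_disj irr_e HCn HM).
  + exact (XX_edges HCn HM HQ).
  + exact (card_XX irr_e HCn HM HQM).
  + move=> t Ht; apply: disjI => F f1 /imsetP[c cC Fc]; subst F.
    have cv : c != v by rewrite eq_sym (neq_of_e irr_e (inCe c cC)).
    move: f1; rewrite inE => /andP[_ /subsetP s].
    apply: (key sym_e irr_e Hcl Hcov Ht (c := c)) => //.
    * by apply: s; rewrite !inE eqxx.
    * by apply: s; rewrite !inE eqxx orbT.
  + move=> t F tS Ft FE0.
    have [h1 h2] := SS_edges irr_e HM tS Ft.
    have [vF|vF] := boolP (v \in F).
    * case: (h2 vF) => c cC Fc; by case/negP: FE0; rewrite Fc; apply/imsetP; exists c.
    * by rewrite inE h1.
- move=> [M [Q [HM HQ HQM Hcov]]].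
  have HCn : nbhd e v \subset nbhd e v by [].
  have Hcl : forall x y, x \in nbhd e v -> y \in nbhd e v -> e x y -> y \in nbhd e v by [].
  split; first by apply/set0Pn; exists v; rewrite inE.
  exists (SS v M), (XX v M Q); split.
  + exact (SS_disj irr_e HCn HM).
  + exact (XX_edges HCn HM HQ).
  + exact (card_XX irr_e HCn HM HQM).
  + move=> t Ht; apply: disjI => x xt; rewrite inE => /eqP xv; subst x.
    have [c [ct cv _]] := tri_third irr_e v v (proj1 Ht).
    apply: (key sym_e irr_e Hcl Hcov Ht (c := c)) => //.
    by rewrite inE; apply: (tri_adj sym_e (proj1 Ht)) => //; rewrite eq_sym.
  + move=> t F tS Ft Fd.
    have [h1 _] := SS_edges irr_e HM tS Ft.
    have vF : v \notin F by apply/negP => vF; apply: (disjE Fd vF); rewrite inE.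
    by rewrite inE h1.
Qed.
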